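(* Assume Setup (S) and the completion data (C), and suppose the integer columns $c_n$ can be (and are) chosen so that $\det A_{n,n+1}=1$ for all $n\ge 0$. Then $G=\mathbb{Z}$ and the homomorphism $\Psi:K_0(\mathfrak{A})\to C(X_{min},\mathbb{Z})$ determined by $\Psi\circ\iota_n=\Phi_n$ is a group isomorphism onto $C(X_{min},\mathbb{Z})$ sending the order unit $[1_{\mathfrak{A}}]$ to $\chi_{X_{min}}$.
   Context: Setup (S): Let $\mathfrak{A}=\varinjlim(\mathfrak{A}_n,\phi_n)$ be an AF C$^*$-algebra with $\mathfrak{A}_0=\mathbb{C}$, $\mathfrak{A}_n$ having exactly $n+1$ summands, $\phi_n$ unital injective $*$-homomorphisms with multiplicity matrices $\overline{A}_{n,n+1}\in M_{n+2,n+1}(\mathbb{N})$ ($(i,j)$ entry = multiplicity of summand $j$ of $\mathfrak{A}_n$ in summand $i$ of $\mathfrak{A}_{n+1}$), each of rank $n+1$. The Bratteli diagram has vertices $v(i,n)$, $1\le i\le n+1$, and $(\overline{A}_{n,n+1})_{ij}$ edges from $v(j,n)$ to $v(i,n+1)$. A minimal reduction is a subgraph with the same vertices, obtained by deleting edges only, in which for all $n\ge 0$ each vertex at level $n+1$ receives exactly one edge from level $n$ and each vertex at level $n$ emits at least one edge to level $n+1$. Fix a minimal reduction. Then for each $n\ge 1$ there are unique $1\le r'_n<r_n\le n+1$ and $1\le a_n\le n$ such that $v(r'_n,n)$ and $v(r_n,n)$ are the two vertices joined to $v(a_n,n-1)$, every other vertex of level $n-1$ being joined to exactly one vertex of level $n$;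 set $r_0=1$. $X_{min}$ is the set of infinite paths $(v(i_n,n))_{n\ge0}$, $i_0=1$, in the minimal reduction, with the topology having as clopen basis the nonempty sets $B(i,n)=\{\text{paths with }i_n=i\}$; it is a compact metrizable totally disconnected space. Define the linear map $R_n:\mathbb{C}^{n+1}\to C(X_{min},\mathbb{C})$ by $R_n(\alpha_1,\dots,\alpha_{n+1})=\sum_{l=0}^n\alpha_{l+1}\chi_{B(r_l,l)}$. Completion data (C): $K_0(\mathfrak{A}_n)$ is identified with $\mathbb{Z}^{n+1}$ (column vectors, positive cone $\mathbb{Z}_+^{n+1}$), $K_0(\phi_n)=\phi_{n*}$ is multiplication by $\overline{A}_{n,n+1}$, and $K_0(\mathfrak{A})=\varinjlim(\mathbb{Z}^{n+1},\phi_{n*})$ with canonical maps $\iota_n$ and order unit the image of $1\in\mathbb{Z}=K_0(\mathfrak{A}_0)$. For each $n\ge 0$ choose a column $c_n\in\mathbb{Z}^{n+2}$ such that $A_{n,n+1}=[\,\overline{A}_{n,n+1}\mid c_n\,]\in M_{n+2}(\mathbb{Z})$ is invertible. Put $A_n=(A_{0,1}^{-1}\oplus I_{n-1})(A_{1,2}^{-1}\oplus I_{n-2})\cdots(A_{n-2,n-1}^{-1}\oplus I_1)A_{n-1,n}^{-1}$ for $n\ge1$, let $G=\bigcup_{n\ge1}\{a/\det(A_n^{-1}):a\in\mathbb{Z}\}\subseteq\mathbb{Q}$ with the discrete topology, and $\Phi_n=R_n\circ A_n$ restricted to $\mathbb{Z}^{n+1}$; one has $\Phi_{n+1}\circ\phi_{n*}=\Phi_n$,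 so $\Psi$ is well defined. *)

(* Defs.v *)
From mathcomp Require Import all_boot all_order all_algebra.
From Stdlib Require Import Relations.
Set Implicit Arguments. Unset Strict Implicit. Unset Printing Implicit Defensive.
Import Order.TTheory GRing.Theory Num.Theory.
Local Open Scope ring_scope.

(* Vertices at level n are indexed 0-based by 'I_n.+1 (v(i,n) <-> i-1). *)

Definition AbarZ (Abar : forall n, 'M[nat]_(n.+2, n.+1)) n : 'M[int]_(n.+2, n.+1) :=
  map_mx (fun k : nat => k%:Z) (Abar n).

(* K_0(phi_n) = multiplication by Abar_{n,n+1} *)
Definition push (Abar : forall n, 'M[nat]_(n.+2, n.+1)) n (v : 'cV[int]_(n.+1))
  : 'cV[int]_(n.+2) := AbarZ Abar n *m v.

(* The inductive limit K_0(A) = lim (Z^{n+1}, phi_n_* ): disjoint union of the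
   Z^{n+1} modulo the equivalence relation generated by (n,v) ~ (n+1, phi_n_* v). *)
Definition K0pre := sigT (fun n : nat => 'cV[int]_(n.+1)).

Definition K0mk n (v : 'cV[int]_(n.+1)) : K0pre :=
  @existT nat (fun n : nat => 'cV[int]_(n.+1)) n v.

Definition K0step (Abar : forall n, 'M[nat]_(n.+2, n.+1)) (x y : K0pre) : Prop :=
  exists n (v : 'cV[int]_(n.+1)),
    x = K0mk v /\ y = K0mk (push Abar v).

Definition K0eq Abar : relation K0pre := clos_refl_sym_trans K0pre (K0step Abar).

(* the order unit: image of 1 in Z = K_0(A_0) *)
Definition K0unit : K0pre := K0mk (1 : 'cV[int]_1).

Definition pathT := forall n : nat, 'I_n.+1.

(* the minimal reduction is given by the (unique) incoming edge of each vertex at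
   level n+1: p n i is the vertex of level n joined to vertex i of level n+1 *)
Definition is_path (p : forall n, 'I_n.+2 -> 'I_n.+1) (x : pathT) : Prop :=
  forall n, p n (x n.+1) = x n.

(* continuous maps X_min -> Z (Z discrete, X_min with the basis B(i,n)):
   every point has a basic neighbourhood B(x_n, n) on which f is constant *)
Definition locconst (p : forall n, 'I_n.+2 -> 'I_n.+1) (f : pathT -> int) : Prop :=
  forall x, is_path p x -> exists n, forall y, is_path p y -> y n = x n -> f y = f x.

Definition Acomp (Abar : forall n, 'M[nat]_(n.+2, n.+1)) (c : forall n, 'cV[int]_(n.+2))
  n : 'M[int]_(n.+2) :=
  castmx (erefl, addn1 n.+1) (row_mx (AbarZ Abar n) (c n)).

Definition intr_mx m k (M : 'M[int]_(m, k)) : 'M[rat]_(m, k) := map_mx (fun z : int => z%:~R) M.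

(* A_n = (A_{0,1}^{-1} (+) I_{n-1}) ... A_{n-1,n}^{-1}, via the recursion
   A_0 = I_1, A_{n+1} = (A_n (+) I_1) A_{n,n+1}^{-1}. *)
Fixpoint Amat (Abar : forall n, 'M[nat]_(n.+2, n.+1)) (c : forall n, 'cV[int]_(n.+2))
  n : 'M[rat]_(n.+1) :=
  match n with
  | 0 => 1%:M
  | m.+1 => castmx (addn1 m.+1, addn1 m.+1) (block_mx (Amat Abar c m) 0 0 1%:M)
            *m invmx (intr_mx (Acomp Abar c m))
  end.

Definition Gset (Abar : forall n, 'M[nat]_(n.+2, n.+1)) (c : forall n, 'cV[int]_(n.+2))
  (q : rat) : Prop :=
  exists n : nat, (1 <= n)%N /\ exists a : int, q = a%:~R / \det (invmx (Amat Abar c n)).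

Definition Rmap (r : forall n, 'I_n.+1) n (alpha : 'cV[rat]_(n.+1)) (x : pathT) : rat :=
  \sum_(l < n.+1) alpha l 0 * (x l == r l)%:R.

Definition Phi Abar c (r : forall n, 'I_n.+1) n (v : 'cV[int]_(n.+1)) : pathT -> rat :=
  Rmap r (Amat Abar c n *m intr_mx v).

Definition Psi Abar c r (x : K0pre) : pathT -> rat :=
  Phi Abar c r (projT2 x).

(* Main.v *)
Require Import Defs.
From mathcomp Require Import all_boot all_order all_algebra.
From Stdlib Require Import Relations ClassicalEpsilon Classical.
Set Implicit Arguments. Unset Strict Implicit. Unset Printing Implicit Defensive.
Import Order.TTheory GRing.Theory Num.Theory.
Local Open Scope ring_scope.

Fixpoint anc (p : forall n, 'I_n.+2 -> 'I_n.+1) n : 'I_n.+1 -> forall l, 'I_l.+1 :=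
  match n return 'I_n.+1 -> forall l, 'I_l.+1 with
  | 0 => fun i l => inord i
  | m.+1 => fun i l => if l == m.+1 then inord i else anc p (p m i) l
  end.

Lemma anc_top p n (i : 'I_n.+1) : anc p i n = i.
Proof.
case: n i => [|n] i /=; last rewrite eqxx; by apply: val_inj; rewrite /= inordK.
Qed.

Lemma anc_S p n (i : 'I_n.+2) l : (l <= n)%N -> anc p i l = anc p (p n i) l.
Proof. by move=> hl /=; case: eqP => // hl'; move: hl; rewrite hl' ltnn. Qed.

Lemma anc_path p z n l : is_path p z -> (l <= n)%N -> anc p (z n) l = z l.
Proof.
move=> hz; elim: n => [|n IH] hl.
  by move: hl; rewrite leqn0 => /eqP ->; apply: anc_top.
case: (ltngtP l n.+1) => [hl'|hl'|->]; [|by move: hl; rewrite leqNgt hl'|exact: anc_top].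
by rewrite anc_S // hz IH.
Qed.

Lemma anc_step p n (i : 'I_n.+1) l : (l < n)%N -> p l (anc p i l.+1) = anc p i l.
Proof.
elim: n i => [|n IH] i hl //.
case: (ltngtP l n) hl => [hl' _|h1 h2|-> _]; last 2 first.
- by move: h2; rewrite ltnS leqNgt h1.
- by rewrite (anc_S _ _ (leqnn n)) !anc_top.
- by rewrite (anc_S _ _ hl') (anc_S _ _ (ltnW hl')) IH.

Qed.

Fixpoint iterp (st : forall n, 'I_n.+1 -> 'I_n.+2) n : 'I_n.+1 :=
  match n with 0 => ord0 | m.+1 => st m (iterp st m) end.

Lemma ex_eq p (hs : forall n (j : 'I_n.+1), exists i : 'I_n.+2, p n i = j) n j :
  exists i, p n i == j.
Proof. by case: (hs n j) => i hi; exists i; apply/eqP. Qed.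

Definition ch p hs n j : 'I_n.+2 := xchoose (@ex_eq p hs n j).

Lemma chP p hs n j : p n (@ch p hs n j) = j.
Proof. exact/eqP/(xchooseP (@ex_eq p hs n j)). Qed.

Definition thru p hs N (j : 'I_N.+1) : pathT :=
  iterp (fun n v => if (n < N)%N then anc p j n.+1 else @ch p hs n v).

Lemma thru_path p hs N j : is_path p (@thru p hs N j) /\ @thru p hs N j N = j.
Proof.
have H : forall n, (n <= N)%N -> thru hs j n = anc p j n.
  elim=> [|n IH] hn /=; first by apply: ord_inj; case: (anc p j 0) => [[]].
  by rewrite /thru /= hn.
split; last by rewrite H // anc_top.
move=> n; rewrite /thru /=; case: ifP => hn.
  by rewrite anc_step // -/(thru hs j n) H // ltnW.
by rewrite chP.
Qed.

Definition RV p (r : forall n, 'I_n.+1) n (alpha : 'cV[rat]_(n.+1)) (j : 'I_n.+1) : rat :=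
  \sum_(l < n.+1) alpha l 0 * (anc p j l == r l)%:R.

Lemma Rmap_RV p r n alpha z : is_path p z -> Rmap r alpha z = RV p r alpha (z n).
Proof.
move=> hz; apply: eq_bigr => l _; by rewrite anc_path // -ltnS.
Qed.

Lemma RV_S p r n (alpha : 'cV[rat]_(n.+2)) (i : 'I_n.+2) :
  RV p r alpha i = RV p r (\col_(l < n.+1) alpha (widen_ord (leqnSn _) l) 0) (p n i)
     + alpha ord_max 0 * (i == r n.+1)%:R.
Proof.
rewrite /RV big_ord_recr /=; congr (_ + _).
  by apply: eq_bigr => l _; rewrite mxE ltn_eqF.
by rewrite eqxx; congr (_ * (_ == _)%:R); apply: val_inj; rewrite /= inordK.
Qed.

Lemma inj_off p n (hs : forall j : 'I_n.+1, exists i : 'I_n.+2, p n i = j)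
  (r' r0 : 'I_n.+2) : r' != r0 -> p n r' = p n r0 ->
  {in [set~ r0] &, injective (p n)}.
Proof.
move=> hne hp; apply/imset_injP; rewrite cardsC1 card_ord /=.
suff -> : p n @: [set~ r0] = setT by rewrite cardsT card_ord.
apply/setP => j; rewrite inE; case: (hs j) => i <-.
case: (eqVneq i r0) => [->|hi].
  by rewrite -hp; apply: imset_f; rewrite !inE.
by apply: imset_f; rewrite !inE.
Qed.

Lemma ord1_eq (x y : 'I_1) : x == y.
Proof. by rewrite !ord1. Qed.

Lemma basis_uniq p (r : forall n, 'I_n.+1)
  (hs : forall n (j : 'I_n.+1), exists i : 'I_n.+2, p n i = j)
  (Hr : forall n, exists r' : 'I_n.+2, (r' < r n.+1)%N /\ p n r' = p n (r n.+1))
  n (alpha : 'cV[rat]_(n.+1)) : (forall j, RV p r alpha j = 0) -> alpha = 0.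
Proof.
elim: n alpha => [|n IH] alpha H.
  apply/matrixP => i k; rewrite !ord1 mxE; have := H ord0.
  by rewrite /RV big_ord1 ord1_eq mulr1.
case: (Hr n) => r' [hlt hp].
have hne : (r' == r n.+1) = false by apply/negbTE/eqP => h; move: hlt; rewrite h ltnn.
have ha : alpha ord_max 0 = 0.
  have := H (r n.+1); have := H r'; rewrite !RV_S hp hne eqxx mulr0 addr0 => ->.
  by rewrite add0r mulr1.
have hS : forall j, RV p r (\col_(l < n.+1) alpha (widen_ord (leqnSn _) l) 0) j = 0.
  move=> j; case: (hs n j) => i <-; have := H i; by rewrite RV_S ha mul0r addr0.
have := IH _ hS => hc.
apply/matrixP => i k; rewrite ord1 mxE.
case: (ltnP i n.+1) => hi.
  have := congr1 (fun M : 'cV[rat]_(n.+1) => M (Ordinal hi) 0) hc; rewrite !mxE.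
  by have -> : widen_ord (leqnSn n.+1) (Ordinal hi) = i by apply: val_inj.
have -> : i = ord_max by apply: val_inj => /=; apply/eqP; rewrite eqn_leq hi -ltnS ltn_ord.
exact: ha.
Qed.

Lemma basis_ex p (r : forall n, 'I_n.+1)
  (hs : forall n (j : 'I_n.+1), exists i : 'I_n.+2, p n i = j)
  (Hr : forall n, exists r' : 'I_n.+2, (r' < r n.+1)%N /\ p n r' = p n (r n.+1))
  n (g : 'I_n.+1 -> int) :
  exists alpha : 'cV[int]_(n.+1), forall j, RV p r (intr_mx alpha) j = (g j)%:~R.
Proof.
elim: n g => [|n IH] g.
  exists (\col_i g ord0) => j; rewrite /RV big_ord1 ord1_eq mulr1 !mxE.
  by rewrite (ord1 j).
case: (Hr n) => r' [hlt hp].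
have hne : r' != r n.+1 by apply/eqP => h; move: hlt; rewrite h ltnn.
have hinj := inj_off (hs n) hne hp.
have expre : forall j, exists i, (i != r n.+1) && (p n i == j).
  move=> j; case: (hs n j) => i <-; case: (eqVneq i (r n.+1)) => [->|hi].
    by exists r'; rewrite hne hp eqxx.
  by exists i; rewrite hi eqxx.
pose pre j := xchoose (expre j).
have preP : forall j, (pre j != r n.+1) && (p n (pre j) == j) := fun j => xchooseP (expre j).
case: (IH (fun j => g (pre j))) => beta hb.
exists (\col_(i < n.+2) (if (i < n.+1)%N then beta (inord i) 0 else g (r n.+1) - g r')).
move=> i; rewrite RV_S.
have -> : \col_(l < n.+1) (intr_mx (\col_(i < n.+2) (if (i < n.+1)%N then beta (inord i) 0 else g (r n.+1) - g r'))) (widen_ord (leqnSn n.+1) l) 0 = intr_mx beta.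
  apply/matrixP => l k; rewrite ord1 !mxE /= ltn_ord; congr (beta _ _ )%:~R.
  by apply: val_inj; rewrite /= inordK.
rewrite hb !mxE /= ltnn.
case: (eqVneq i (r n.+1)) => [->|hi].
  have := preP (p n (r n.+1)); case/andP => h1 /eqP h2.
  have -> : pre (p n (r n.+1)) = r'.
    by apply: hinj; rewrite ?inE // h2 hp.
  by rewrite mulr1 -intrD addrC subrK.
have := preP (p n i); case/andP => h1 /eqP h2.
have -> : pre (p n i) = i by apply: hinj; rewrite ?inE.
by rewrite mulr0 addr0.
Qed.

Lemma cm1 {R : pzRingType} a b (e : a = b) k l (A : 'M[R]_(a, k)) (B : 'M[R]_(k, l)) :
  castmx (e, erefl) A *m B = castmx (e, erefl) (A *m B).
Proof. by case: b / e; rewrite !castmx_id. Qed.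
Lemma cm2 {R : pzRingType} a b (e : a = b) k l (A : 'M[R]_(k, a)) (B : 'M[R]_(a, l)) :
  castmx (erefl, e) A *m castmx (e, erefl) B = A *m B.
Proof. by case: b / e; rewrite !castmx_id. Qed.
Lemma cm3 {R : pzRingType} a b (e : a = b) l (A : 'M[R]_a) (B : 'M[R]_(a, l)) :
  castmx (e, e) A *m castmx (e, erefl) B = castmx (e, erefl) (A *m B).
Proof. by case: b / e; rewrite !castmx_id. Qed.
Lemma cm4 {R : pzRingType} a b (e : a = b) (A B : 'M[R]_a) :
  castmx (e, e) A *m castmx (e, e) B = castmx (e, e) (A *m B).
Proof. by case: b / e; rewrite !castmx_id. Qed.
Lemma cm5 {R : pzRingType} a b (e : a = b) : castmx (e, e) (1%:M : 'M[R]_a) = 1%:M.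
Proof. by case: b / e; rewrite !castmx_id. Qed.

Fixpoint AZ (Abar : forall n, 'M[nat]_(n.+2, n.+1)) (c : forall n, 'cV[int]_(n.+2))
  n : 'M[int]_(n.+1) :=
  match n with
  | 0 => 1%:M
  | m.+1 => castmx (addn1 m.+1, addn1 m.+1) (block_mx (AZ Abar c m) 0 0 1%:M)
            *m \adj (Acomp Abar c m)
  end.

Fixpoint BZ (Abar : forall n, 'M[nat]_(n.+2, n.+1)) (c : forall n, 'cV[int]_(n.+2))
  n : 'M[int]_(n.+1) :=
  match n with
  | 0 => 1%:M
  | m.+1 => Acomp Abar c m *m castmx (addn1 m.+1, addn1 m.+1) (block_mx (BZ Abar c m) 0 0 1%:M)
  end.

Lemma intr_mxM m k l (A : 'M[int]_(m, k)) (B : 'M[int]_(k, l)) :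
  intr_mx (A *m B) = intr_mx A *m intr_mx B.
Proof. exact: map_mxM. Qed.

Lemma intr_unit m (A : 'M[int]_m) : \det A = 1 -> invmx (intr_mx A) = intr_mx (\adj A).
Proof.
move=> h; rewrite /invmx unitmxE /intr_mx det_map_mx h rmorph1 unitr1 invr1 scale1r.
by rewrite map_mx_adj.
Qed.

Lemma Amat_eq Abar c (Hdet : forall n, \det (Acomp Abar c n) = 1) n :
  Amat Abar c n = intr_mx (AZ Abar c n).
Proof.
elim: n => [|n IH] /=; first by rewrite /intr_mx map_mx1.
rewrite intr_unit // IH intr_mxM; congr (_ *m _).
by rewrite /intr_mx map_castmx map_block_mx map_mx1 !map_mx0.
Qed.

Lemma AB Abar c (Hdet : forall n, \det (Acomp Abar c n) = 1) n :
  AZ Abar c n *m BZ Abar c n = 1%:M.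
Proof.
elim: n => [|n IH] /=; first by rewrite mulmx1.
rewrite -mulmxA (mulmxA (\adj _)) mul_adj_mx Hdet mul1mx cm4 mulmx_block.
rewrite IH !mulmx0 !mul0mx !addr0 add0r mulmx1 -scalar_mx_block.
exact: cm5.
Qed.

Lemma step_eq Abar c (Hdet : forall n, \det (Acomp Abar c n) = 1) n (v : 'cV[int]_(n.+1)) :
  Amat Abar c n.+1 *m intr_mx (AbarZ Abar n *m v)
  = castmx (addn1 n.+1, erefl) (col_mx (Amat Abar c n *m intr_mx v) 0).
Proof.
set X := intr_mx (Acomp Abar c n).
have hX : X \in unitmx by rewrite unitmxE /X /intr_mx det_map_mx Hdet rmorph1 unitr1.
have hAb : intr_mx (AbarZ Abar n) = X *m castmx (addn1 n.+1, erefl) (col_mx 1%:M 0).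
  rewrite /X /Acomp /intr_mx map_castmx map_row_mx cm2 mul_row_col mulmx1 mulmx0.
  by rewrite addr0.
rewrite /= intr_mxM hAb !mulmxA -(mulmxA _ (invmx X)) mulVmx // mulmx1.
by rewrite cm3 mul_block_col !mulmx1 !mulmx0 ?mul0mx addr0 ?add0r cm1 mul_col_mx mul0mx.
Qed.

Lemma Rmap_cast r n (u : 'cV[rat]_(n.+1)) z :
  Rmap r (castmx (addn1 n.+1, erefl) (col_mx u 0)) z = Rmap r u z.
Proof.
rewrite /Rmap big_ord_recr /=.
have -> : castmx (addn1 n.+1, erefl) (col_mx u 0) ord_max 0 = 0.
  rewrite castmxE.
  have -> : cast_ord (esym (addn1 n.+1)) ord_max = rshift n.+1 (ord0 : 'I_1).
    by apply: val_inj; rewrite /= addn0.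
  by rewrite col_mxEd mxE.
rewrite mul0r addr0; apply: eq_bigr => l _; congr (_ * _).
rewrite castmxE.
have -> : cast_ord (esym (addn1 n.+1)) (widen_ord (leqnSn n.+1) l) = lshift 1 l.
  by apply: val_inj.
by rewrite col_mxEu; congr (u _ _); apply: val_inj.
Qed.

Lemma PsiE Abar c r n (v : 'cV[int]_(n.+1)) z :
  Psi Abar c r (K0mk v) z = Rmap r (Amat Abar c n *m intr_mx v) z.
Proof. by []. Qed.

Lemma Rmap_add r n (a b : 'cV[rat]_(n.+1)) z : Rmap r (a + b) z = Rmap r a z + Rmap r b z.
Proof. by rewrite /Rmap -big_split; apply: eq_bigr => l _; rewrite mxE mulrDl. Qed.

Lemma Rmap_sub r n (a b : 'cV[rat]_(n.+1)) z : Rmap r (a - b) z = Rmap r a z - Rmap r b z.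
Proof. by rewrite /Rmap -sumrB; apply: eq_bigr => l _; rewrite !mxE mulrBl. Qed.

Lemma dets Abar c (Hdet : forall n, \det (Acomp Abar c n) = 1) n :
  exists dA dB : int, dA * dB = 1 /\ \det (invmx (Amat Abar c n)) = dB%:~R.
Proof.
have hAB := AB Hdet n.
have hm : Amat Abar c n *m intr_mx (BZ Abar c n) = 1%:M.
  by rewrite Amat_eq // -intr_mxM hAB /intr_mx map_mx1.
have hu : Amat Abar c n \in unitmx.
  by case/mulmx1_unit: hm.
have -> : invmx (Amat Abar c n) = intr_mx (BZ Abar c n).
  by rewrite -[invmx _]mulmx1 -hm mulmxA mulVmx // mul1mx.
exists (\det (AZ Abar c n)), (\det (BZ Abar c n)); split.
  by rewrite -det_mulmx hAB det1.
by rewrite /intr_mx det_map_mx.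
Qed.

Lemma Kinv Abar c r (Hdet : forall n, \det (Acomp Abar c n) = 1) x y :
  K0eq Abar x y -> forall z, Psi Abar c r x z = Psi Abar c r y z.
Proof.
elim=> {x y} [x y [n [v [-> ->]]]|x|x y _ IH|x y w _ IH1 _ IH2] z.
- by rewrite !PsiE /push step_eq // Rmap_cast.
- by [].
- by rewrite IH.
- by rewrite IH1 IH2.
Qed.

Lemma lift Abar k n (v : 'cV[int]_(n.+1)) N : N = (k + n)%N ->
  exists w : 'cV[int]_(N.+1), K0eq Abar (K0mk v) (K0mk w).
Proof.
move=> ->; elim: k => [|k [w hw]]; first by exists v; apply: rst_refl.
exists (push Abar w); apply: rst_trans hw _; apply: rst_step.
by exists (k + n)%N, w.
Qed.

Lemma good_mono p (f : pathT -> int) n (i : 'I_n.+1) m M : (m <= M)%N ->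
  (forall y y' : pathT, is_path p y -> is_path p y' -> y n = i -> y' n = i -> y m = y' m -> f y = f y') ->
  (forall y y' : pathT, is_path p y -> is_path p y' -> y n = i -> y' n = i -> y M = y' M -> f y = f y').
Proof.
move=> hmM H y y' hy hy' h1 h2 h3; apply: H => //.
by rewrite -(anc_path hy hmM) -(anc_path hy' hmM) h3.
Qed.

Definition good p (f : pathT -> int) n (v : 'I_n.+1) := exists m,
  forall y y', is_path p y -> is_path p y' -> y n = v -> y' n = v -> y m = y' m -> f y = f y'.

Lemma goodS p f n (v : 'I_n.+1) :
  (forall i : 'I_n.+2, p n i = v -> good p f i) -> good p f v.
Proof.
move=> H.
have : forall s : seq 'I_n.+2, exists M, forall i, i \in s -> p n i = v ->
   forall y y', is_path p y -> is_path p y' -> y n.+1 = i -> y' n.+1 = i -> y M = y' M -> f y = f y'.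
  elim=> [|a s [M HM]]; first by exists 0%N.
  case: (boolP (p n a == v)) => [/eqP ha|ha].
    case: (H a ha) => m hm; exists (maxn m M) => i; rewrite inE => /orP [/eqP ->|his] hpi.
      by apply: good_mono hm; rewrite leq_maxl.
    by apply: good_mono (HM i his hpi); rewrite leq_maxr.
  exists M => i; rewrite inE => /orP [/eqP ->|his] hpi; first by rewrite hpi eqxx in ha.
  exact: HM.
case/(_ (enum 'I_n.+2)) => M HM; exists (maxn M n.+1) => y y' hy hy' h1 h2 h3.
have e1 : y n.+1 = y' n.+1.
  by rewrite -(anc_path hy (leq_maxr M n.+1)) -(anc_path hy' (leq_maxr M n.+1)) h3.
apply: (HM (y n.+1)) => //; first by rewrite mem_enum.
  by rewrite hy.
by rewrite -(anc_path hy (leq_maxl M n.+1)) -(anc_path hy' (leq_maxl M n.+1)) h3.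
Qed.

Lemma compact p f : locconst p f ->
  exists N, forall y y', is_path p y -> is_path p y' -> y N = y' N -> f y = f y'.
Proof.
move=> hf.
suff [m hm] : good p f (ord0 : 'I_1).
  by exists m => y y' hy hy'; apply: hm => //; rewrite ord1.
apply: NNPP => hbad.
have ex : forall n (v : 'I_n.+1), exists i : 'I_n.+2,
    ~ good p f v -> p n i = v /\ ~ good p f i.
  move=> n v; case: (classic (good p f v)) => hg; first by exists ord0.
  have : ~ (forall i : 'I_n.+2, p n i = v -> good p f i) by move=> h; apply: hg; apply: goodS.
  move/not_all_ex_not => [i hi]; exists i => _.
  split; first by apply: NNPP => h; apply: hi => h'; case: h.
  by move=> h; apply: hi.
pose st n v := proj1_sig (constructive_indefinite_description _ (ex n v)).
have stP : forall n v, ~ good p f v -> p n (st n v) = v /\ ~ good p f (st n v).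
  by move=> n v; rewrite /st; case: constructive_indefinite_description.
pose x := iterp st.
have xbad : forall n, ~ good p f (x n).
  elim=> [|n IH] /=; first by have -> : x 0%N = ord0 by rewrite ord1.
  exact: (stP n _ IH).2.
have xp : is_path p x by move=> n; exact: (stP n _ (xbad n)).1.
case: (hf x xp) => n0 hn0; apply: (xbad n0); exists n0 => y y' hy hy' h1 h2 _.
by rewrite (hn0 y hy h1) (hn0 y' hy' h2).
Qed.

Theorem theorem4p2
  (Abar : forall n, 'M[nat]_(n.+2, n.+1))
  (Hrank : forall n, \rank (intr_mx (AbarZ Abar n) : 'M[rat]_(n.+2, n.+1)) = n.+1)
  (p : forall n, 'I_n.+2 -> 'I_n.+1)
  (Hp_edge : forall n (i : 'I_n.+2), (0 < Abar n i (p n i))%N)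
  (Hp_surj : forall n (j : 'I_n.+1), exists i : 'I_n.+2, p n i = j)
  (r : forall n, 'I_n.+1)
  (Hr : forall n, exists r' : 'I_n.+2, (r' < r n.+1)%N /\ p n r' = p n (r n.+1))
  (c : forall n, 'cV[int]_(n.+2))
  (Hdet : forall n, \det (Acomp Abar c n) = 1) :
  (forall q : rat, Gset Abar c q <-> exists a : int, q = a%:~R)
  /\ (forall x y, K0eq Abar x y ->
        forall z, is_path p z -> Psi Abar c r x z = Psi Abar c r y z)
  /\ (forall n (v w : 'cV[int]_(n.+1)) z, is_path p z ->
        Psi Abar c r (K0mk (v + w)) z
        = Psi Abar c r (K0mk v) z + Psi Abar c r (K0mk w) z)
  /\ (forall x, exists f : pathT -> int, locconst p f /\
        forall z, is_path p z -> Psi Abar c r x z = (f z)%:~R)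
  /\ (forall x y, (forall z, is_path p z -> Psi Abar c r x z = Psi Abar c r y z) ->
        K0eq Abar x y)
  /\ (forall f : pathT -> int, locconst p f ->
        exists x, forall z, is_path p z -> Psi Abar c r x z = (f z)%:~R)
  /\ (forall z, is_path p z -> Psi Abar c r K0unit z = 1).
Proof.
have AmB : forall n, Amat Abar c n *m intr_mx (BZ Abar c n) = 1%:M.
  by move=> n; rewrite Amat_eq // -intr_mxM AB // /intr_mx map_mx1.
split.
  move=> q; split.
    case=> n [_ [a ->]]; case: (dets Hdet n) => dA [dB [hd ->]].
    have hd' : dA%:~R * dB%:~R = 1 :> rat by rewrite -intrM hd.
    have hB : dB%:~R != 0 :> rat by apply/eqP => h; move: hd'; rewrite h mulr0 => /eqP; rewrite eq_sym oner_eq0.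
    by exists (a * dA); rewrite intrM -[RHS](mulfK hB) -(mulrA a%:~R) hd' mulr1.
  case=> a ->; exists 1%N; split => //.
  case: (dets Hdet 1) => dA [dB [hd ->]]; exists (a * dB).
  have hB : dB%:~R != 0 :> rat.
    by apply/eqP => h; move: hd; move/(congr1 (fun z : int => z%:~R : rat)); rewrite intrM h mulr0 => /eqP; rewrite eq_sym oner_eq0.
  by rewrite intrM mulfK.
split; first by move=> x y h z _; exact: Kinv h z.
split.
  by move=> n v w z _; rewrite !PsiE /intr_mx map_mxD mulmxDr Rmap_add.
split.
  case=> n v.
  exists (fun z => \sum_(l < n.+1) (AZ Abar c n *m v) l 0 * (z l == r l)%:R); split.
    move=> x hx; exists n => y hy hyx; apply: eq_bigr => l _.
    have hl : (l <= n)%N by rewrite -ltnS.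
    by rewrite -(anc_path hy hl) -(anc_path hx hl) hyx.
  move=> z _; rewrite (PsiE _ _ _ v) Amat_eq // -intr_mxM /Rmap rmorph_sum; apply: eq_bigr => l _.
  by rewrite !mxE rmorphM rmorph_nat.
split.
  case=> n v [m w] H.
  case: (@lift Abar m n v _ erefl) => v' hv.
  case: (@lift Abar n m w _ (addnC m n)) => w' hw.
  have e : v' = w'.
    have hd : forall j, RV p r (Amat Abar c (m + n) *m intr_mx (v' - w')) j = 0.
      move=> j; have [hz hzj] := thru_path Hp_surj j.
      rewrite -hzj -Rmap_RV // /intr_mx map_mxB mulmxBr Rmap_sub.
      by rewrite -!PsiE -(Kinv r Hdet hv) -(Kinv r Hdet hw) H // subrr.
    have h0 := basis_uniq Hp_surj Hr hd.
    have : intr_mx (v' - w') = 0.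
      by rewrite -[intr_mx _]mul1mx -(mulmx1C (AmB _)) -mulmxA h0 mulmx0.
    move=> h1; apply: subr0_eq; apply/matrixP => i k.
    have := congr1 (fun M : 'M[rat]_(_, 1) => M i k) h1; rewrite !mxE => /eqP.
    by rewrite intr_eq0 => /eqP.
  subst w'; apply: rst_trans hv _; exact: rst_sym.
split.
  move=> f hf; case: (compact hf) => N HN.
  case: (basis_ex Hp_surj Hr (fun j : 'I_N.+1 => f (@thru p Hp_surj N j))) => alpha ha.
  exists (K0mk (BZ Abar c N *m alpha)) => z hz.
  rewrite PsiE intr_mxM mulmxA AmB mul1mx (@Rmap_RV p r N (intr_mx alpha) z hz) ha.
  have [ht htN] := thru_path Hp_surj (z N).
  by rewrite (HN _ z ht hz htN).
move=> z _; rewrite /K0unit PsiE /Rmap big_ord1 /= /intr_mx map_mx1 mulmx1 mxE eqxx.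
by rewrite ord1_eq mulr1.
Qed.
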